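(* For every $0<\varepsilon<\frac{\pi^2}{2}$ and every $x\in\mathbb T^d$, $$\frac{1}{(2\pi\varepsilon)^{d/2}}e^{-\frac{\mathrm{dist}(x,0_d)^2}{2\varepsilon}}\le\mathcal K_\varepsilon(x)\le2^{d+1}e^{5d}\cdot\frac{1}{(2\pi\varepsilon)^{d/2}}e^{-\frac{\mathrm{dist}(x,0_d)^2}{2\varepsilon}}.$$
   Context: $\mathbb T^d=\mathbb R^d/2\pi\mathbb Z^d$ with $\mathrm{dist}(x,y)=\min_{k\in\mathbb Z^d}\|x-y-2\pi k\|$, and $\mathcal K_\varepsilon(x)=(2\pi\varepsilon)^{-d/2}\sum_{k\in\mathbb Z^d}e^{-\|x-2\pi k\|^2/(2\varepsilon)}$ is the Gaussian (heat) kernel on $\mathbb T^d$. *)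

(* Defs.v *)
From HB Require Import structures.
From mathcomp Require Import all_boot all_order all_algebra.
From mathcomp Require Import all_classical all_reals all_analysis.
Set Implicit Arguments. Unset Strict Implicit. Unset Printing Implicit Defensive.
Import Order.TTheory GRing.Theory Num.Theory.
Import numFieldNormedType.Exports.
Local Open Scope classical_set_scope.
Local Open Scope ring_scope.

(* Points of T^d = R^d / 2 pi Z^d are represented by any representative
   x : 'I_d -> R; lattice vectors k in Z^d are {ffun 'I_d -> int}. *)

Definition sqnorm_shift (R : realType) (d : nat) (x : 'I_d -> R)
  (k : {ffun 'I_d -> int}) : R :=
  \sum_(i < d) (x i - 2 * pi * (k i)%:~R) ^+ 2.

(* dist(x, 0_d) = min_{k in Z^d} || x - 2 pi k || (the min exists, so it is the inf) *)
Definition tdist0 (R : realType) (d : nat) (x : 'I_d -> R) : R :=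
  inf [set Num.sqrt (sqnorm_shift x k) | k in [set: {ffun 'I_d -> int}]].

Definition gauss_const (R : realType) (d : nat) (eps : R) : R :=
  (2 * pi * eps) `^ (- (d%:R / 2)).

Definition heatK (R : realType) (d : nat) (eps : R) (x : 'I_d -> R) : \bar R :=
  ((gauss_const d eps)%:E *
   \esum_(k in [set: {ffun 'I_d -> int}])
      (expR (- sqnorm_shift x k / (2 * eps)))%:E)%E.

Arguments sqnorm_shift {R} d x k.
Arguments tdist0 {R} d x.
Arguments gauss_const {R} d eps.
Arguments heatK {R} d eps x.

(* Main.v *)
Require Import Defs.
From HB Require Import structures.
From mathcomp Require Import all_boot all_order all_algebra.
From mathcomp Require Import all_classical all_reals all_analysis.
From mathcomp Require Import ring lra zify.
Import Order.TTheory GRing.Theory Num.Theory.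
Import numFieldNormedType.Exports.
Local Open Scope classical_set_scope.
Local Open Scope ring_scope.

Lemma int_cases (R : realType) (j : int) :
  let a : R := (`|j|%N)%:R in
  (j%:~R = a \/ j%:~R = - a) /\ (a = 0 \/ 1 <= a).
Proof.
move=> a; split.
  rewrite /a natr_absz intr_norm.
  case: (lerP 0 (j%:~R : R)) => h; [left; rewrite ger0_norm // | right; rewrite ltr0_norm ?opprK //].
rewrite /a; case: (`|j|%N) => [|n]; [by left | right; by rewrite ler1n].
Qed.

Lemma keyA (R : realType) (eps y : R) (j : int) : 0 < eps -> eps <= pi^+2/2 -> `|y| <= pi ->
  y^+2 + 8*eps*((`|j|%N)%:R - 1) <= (y - 2*pi*j%:~R)^+2.
Proof.
move=> e0 epi ypi.
have pi0 : 0 < pi :> R := pi_gt0 R.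
have [hr ha] := int_cases R j.
set a : R := (`|j|%N)%:R in hr ha *.
set r : R := j%:~R in hr *.
have [y1 y2] : - pi <= y /\ y <= pi by move: ypi; rewrite ler_norml => /andP[].
have a0 : 0 <= a by case: ha => [->|]; lra.
have h1 : r * y <= pi * a.
  case: hr => ->; first by rewrite mulrC ler_wpM2r.
  by rewrite mulNr -mulrN mulrC ler_wpM2r // lerNl.
have h2 : 0 <= a^+2 - a by case: ha => [->|]; nra.
have hr2 : r^+2 = a^+2 by case: hr => ->; rewrite ?sqrrN.
have h3 : 8 * eps * (a - 1) <= 8 * eps * (a^+2 - a).
  rewrite -subr_ge0 (_ : _ - _ = (8 * eps) * (a - 1)^+2); last by ring.
  apply: mulr_ge0; [lra | exact: sqr_ge0].
have h4 : 8 * eps * (a^+2 - a) <= 4 * pi^+2 * (a^+2 - a).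
  rewrite -subr_ge0 (_ : _ - _ = (4 * pi^+2 - 8 * eps) * (a^+2 - a)); last by ring.
  apply: mulr_ge0 => //; lra.
have -> : (y - 2*pi*r)^+2 = y^+2 - 4*pi*(r*y) + 4*pi^+2 * r^+2 by ring.
rewrite hr2; nra.
Qed.

Lemma keyB (R : realType) (y : R) (j : int) : `|y| <= pi ->
  y^+2 <= (y - 2*pi*j%:~R)^+2.
Proof.
move=> ypi.
have pi0 : 0 < pi :> R := pi_gt0 R.
have [hr ha] := int_cases R j.
set a : R := (`|j|%N)%:R in hr ha *.
set r : R := j%:~R in hr *.
have [y1 y2] : - pi <= y /\ y <= pi by move: ypi; rewrite ler_norml => /andP[].
have a0 : 0 <= a by case: ha => [->|]; lra.
have h1 : r * y <= pi * a.
  case: hr => ->; first by rewrite mulrC ler_wpM2r.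
  by rewrite mulNr -mulrN mulrC ler_wpM2r // lerNl.
have h2 : 0 <= a^+2 - a by case: ha => [->|]; nra.
have hr2 : r^+2 = a^+2 by case: hr => ->; rewrite ?sqrrN.
have -> : (y - 2*pi*r)^+2 = y^+2 - 4*pi*(r*y) + 4*pi^+2 * r^+2 by ring.
rewrite hr2; nra.
Qed.

Definition kst (R : realType) (d : nat) (x : 'I_d -> R) : {ffun 'I_d -> int} :=
  [ffun i => Num.floor (x i / (2 * pi) + 2^-1)].
Arguments kst {R d}.

Lemma z_bound (R : realType) (d : nat) (x : 'I_d -> R) i :
  `|x i - 2 * pi * (kst x i)%:~R| <= pi.
Proof.
have pi0 : 0 < pi :> R := pi_gt0 R.
rewrite /kst ffunE.
set u := x i / (2 * pi) + 2^-1.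
have h1 := floor_le u. have h2 := floorD1_gt u. rewrite intrD in h2.
move: h1 h2; set f := (Num.floor u)%:~R => h1 h2.
have hx : x i = 2 * pi * u - pi.
  rewrite /u; field; lra.
rewrite hx ler_norml; apply/andP; split; nra.
Qed.
Arguments z_bound {R d}.

Lemma sqnorm_min (R : realType) (d : nat) (x : 'I_d -> R) k :
  sqnorm_shift d x (kst x) <= sqnorm_shift d x k.
Proof.
rewrite /sqnorm_shift; apply: ler_sum => i _.
have := @keyB R _ (k i - kst x i) (z_bound x i).
have -> : x i - 2 * pi * (k i)%:~R =
  (x i - 2 * pi * (kst x i)%:~R) - 2 * pi * (k i - kst x i)%:~R.
  by rewrite intrB; ring.
by [].
Qed.

Lemma tdist0E (R : realType) (d : nat) (x : 'I_d -> R) :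
  tdist0 d x = Num.sqrt (sqnorm_shift d x (kst x)).
Proof.
rewrite /tdist0; set S := [set _ | _ in _].
have mS : S (Num.sqrt (sqnorm_shift d x (kst x))) by exists (kst x).
have lb : lbound S (Num.sqrt (sqnorm_shift d x (kst x))).
  move=> _ [k _ <-]; rewrite ler_sqrt; first exact: sqnorm_min.
  by apply: sumr_ge0 => i _; exact: sqr_ge0.
apply/le_anti/andP; split.
  by apply: ge_inf => //; exists (Num.sqrt (sqnorm_shift d x (kst x))).
by apply: lb_le_inf => //; exists (Num.sqrt (sqnorm_shift d x (kst x))).
Qed.

Definition wt (R : realType) (n : int) : R := expR 4 * 2^-1 ^+ `|n|%N.

Lemma wt_ge0 (R : realType) n : 0 <= wt R n.
Proof. by apply: mulr_ge0; [exact: ltW (expR_gt0 _) | apply: exprn_ge0; rewrite invr_ge0]. Qed.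

Lemma exp_w (R : realType) (n : int) : expR (4 - 4 * (`|n|%N)%:R) <= wt R n.
Proof.
rewrite /wt expRD; apply: ler_wpM2l; first exact: ltW (expR_gt0 _).
rewrite (_ : - (4 * _) = (`|n|%N)%:R * (-4)); last by ring.
rewrite expRM_natl; apply: lerXn2r; rewrite ?nnegrE ?invr_ge0 ?ltW ?expR_gt0 //.
rewrite expRN ltf_pV2 ?posrE ?expR_gt0 //.
by have := expR_ge1Dx (4 : R); lra.
Qed.

Lemma term_bound (R : realType) (d : nat) (x : 'I_d -> R) (eps : R) (j : {ffun 'I_d -> int}) :
  0 < eps -> eps <= pi ^+ 2 / 2 ->
  expR (- sqnorm_shift d x [ffun i => j i + kst x i] / (2 * eps)) <=
  expR (- sqnorm_shift d x (kst x) / (2 * eps)) * \prod_(i < d) wt R (j i).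
Proof.
move=> e0 epi.
set S := sqnorm_shift d x (kst x).
set S' := sqnorm_shift d x _.
set A := \sum_(i < d) ((`|j i|%N)%:R - 1 : R).
have hs : S + 8 * eps * A <= S'.
  rewrite /S /S' /A /sqnorm_shift mulr_sumr -big_split /=; apply: ler_sum => i _.
  have -> : [ffun i0 => j i0 + kst x i0] i = j i + kst x i by rewrite [LHS]ffunE.
  rewrite intrD.
  have -> : x i - 2 * pi * ((j i)%:~R + (kst x i)%:~R) =
    (x i - 2 * pi * (kst x i)%:~R) - 2 * pi * (j i)%:~R by ring.
  exact: (@keyA R eps _ (j i) e0 epi (z_bound x i)).
have hA : \sum_(i < d) (4 - 4 * (`|j i|%N)%:R : R) = - 4 * A.
  by rewrite /A mulr_sumr; apply: eq_bigr => i _; ring.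
apply: (@le_trans _ _ (expR (- S / (2 * eps) + \sum_(i < d) (4 - 4 * (`|j i|%N)%:R)))).
  rewrite ler_expR hA.
  have -> : - S / (2 * eps) + -4 * A = - (S + 8 * eps * A) / (2 * eps).
    by field; lra.
  apply: ler_wpM2r; first by rewrite invr_ge0; lra.
  by rewrite lerN2.
rewrite expRD expR_sum; apply: ler_wpM2l; first exact: ltW (expR_gt0 _).
apply: ler_prod => i _; apply/andP; split; first exact: ltW (expR_gt0 _).
exact: exp_w.
Qed.

Definition enc (N : nat) (p : bool * 'I_N.+1) : int :=
  if p.1 then Posz (nat_of_ord p.2) else Negz (nat_of_ord p.2).
Arguments enc {N}.

Lemma enc_inj N : injective (@enc N).
Proof.
move=> [[] a] [[] b]; rewrite /enc /= => h //.
- by case: h => /val_inj ->.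
- by case: h => /val_inj ->.
Qed.

Definition phi (d N : nat) (f : {ffun 'I_d -> bool * 'I_N.+1}) : {ffun 'I_d -> int} :=
  [ffun i => enc (f i)].

Lemma phi_inj d N : injective (phi d N).
Proof.
move=> f g /ffunP h; apply/ffunP => i; apply: enc_inj.
by have := h i; rewrite !ffunE.
Qed.

Lemma phi_cover d N (j : {ffun 'I_d -> int}) :
  (forall i, (`|j i| <= N)%N) -> exists f, phi d N f = j.
Proof.
move=> hj.
exists [ffun i => match j i with Posz n => (true, inord n) | Negz n => (false, inord n) end].
apply/ffunP => i; rewrite !ffunE.
have := hj i; case: (j i) => n /= hn; rewrite /enc /= inordK //; lia.
Qed.

Lemma fsbig_finT (R : realType) (T : finType) (F : T -> R) :
  \sum_(i \in [set: T]) F i = \sum_(i : T) F i.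
Proof.
rewrite fsbig_finite /=; last exact: finite_finset.
apply: perm_big; apply: uniq_perm.
- exact: finmap.fset_uniq.
- exact: index_enum_uniq.
- move=> i; rewrite in_fset_set ?inE; [ | exact: finite_finset].
  by rewrite mem_index_enum; apply/mem_set.
Qed.

Lemma geo (R : realType) n : \sum_(t < n) (2^-1 : R) ^+ t = 2 - 2 * 2^-1 ^+ n.
Proof.
elim: n => [|n IH]; first by rewrite big_ord0 expr0; lra.
rewrite big_ord_recr /= IH exprS mulrA (_ : 2 * 2^-1 = 1 :> R) ?mul1r; first lra.
by rewrite divff.
Qed.

Lemma sum_enc_le (R : realType) N :
  \sum_(p : bool * 'I_N.+1) wt R (enc p) <= 3 * expR 4.
Proof.
rewrite -(pair_bigA _ (fun b t => wt R (enc (b, t)))) big_bool /= /wt /enc /=.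
rewrite -!mulr_sumr.
have h1 := geo R N.+1.
have h2 : \sum_(t < N.+1) (2^-1 : R) ^+ t.+1 = 2^-1 * \sum_(t < N.+1) (2^-1 : R) ^+ t.
  by rewrite mulr_sumr; apply: eq_bigr => t _; rewrite exprS.
rewrite h2 h1.
have q0 : 0 <= (2^-1 : R) ^+ N.+1 by apply: exprn_ge0; rewrite invr_ge0.
have e0 : 0 < expR 4 :> R := expR_gt0 _.
nra.
Qed.

Lemma box_sum (R : realType) d N :
  \sum_(f : {ffun 'I_d -> bool * 'I_N.+1}) \prod_(i < d) wt R (phi d N f i) =
  (\sum_(p : bool * 'I_N.+1) wt R (enc p)) ^+ d.
Proof.
under eq_bigr => f _ do under eq_bigr => i _ do rewrite ffunE.
rewrite -(bigA_distr_bigA (fun (i : 'I_d) (p : bool * 'I_N.+1) => wt R (enc p))) /=.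
by rewrite prodr_const card_ord.
Qed.

Lemma seq_bound d (s : seq {ffun 'I_d -> int}) :
  exists N, forall j, j \in s -> forall i, (`|j i| <= N)%N.
Proof.
elim: s => [|a s [N hN]]; first by exists 0%N.
exists (maxn N (\max_(i < d) `|a i|)%N) => j; rewrite inE => /orP [/eqP -> | /hN h] i.
  exact: leq_trans (@leq_bigmax _ (fun i0 => `|a i0|%N) i) (leq_maxr _ _).
exact: leq_trans (h i) (leq_maxl _ _).
Qed.

Lemma fin_bound (R : realType) d (X : set {ffun 'I_d -> int}) : finite_set X ->
  \sum_(j \in X) \prod_(i < d) wt R (j i) <= (3 * expR 4) ^+ d.
Proof.
move=> fX.
have [N hN0] := @seq_bound d (finmap.enum_fset (fset_set X)).
have hN : forall j, X j -> forall i, (`|j i| <= N)%N.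
  by move=> j Xj i; apply: hN0; rewrite in_fset_set // inE.
set B := (phi d N) @` [set: {ffun 'I_d -> bool * 'I_N.+1}].
have XB : {subset X <= B}.
  move=> j; rewrite inE => Xj; rewrite inE.
  by have [f hf] := @phi_cover d N j (hN j Xj); exists f.
have fB : finite_set B by apply: finite_image; exact: finite_finset.
rewrite -lee_fin -fsumEFin //.
apply: (le_trans (lee_fsum_nneg_subset fX fB XB _)).
  move=> t _; change ((0 : R)%:E <= (\prod_(i < d) wt R (t i))%:E)%E.
  by rewrite lee_fin; apply: prodr_ge0 => i _; exact: wt_ge0.
rewrite /B fsbig_image; last by move=> f g _ _; apply: phi_inj.
rewrite fsumEFin; last exact: finite_finset.
rewrite lee_fin.
rewrite fsbig_finT.
rewrite box_sum.
apply: lerXn2r; rewrite ?nnegrE; last exact: sum_enc_le.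
- by apply: sumr_ge0 => p _; exact: wt_ge0.
- by apply: mulr_ge0 => //; exact: ltW (expR_gt0 _).
Qed.

Lemma esum_bound (R : realType) (d : nat) (eps : R) (x : 'I_d -> R) :
  0 < eps -> eps <= pi ^+ 2 / 2 ->
  (\esum_(k in [set: {ffun 'I_d -> int}])
      (expR (- sqnorm_shift d x k / (2 * eps)))%:E <=
   (expR (- sqnorm_shift d x (kst x) / (2 * eps)) * (3 * expR 4) ^+ d)%:E)%E.
Proof.
move=> e0 epi.
set E := expR (- sqnorm_shift d x (kst x) / (2 * eps)).
rewrite (reindex_esum [set: {ffun 'I_d -> int}] [set: {ffun 'I_d -> int}]
   (fun j => [ffun i => j i + kst x i])); last first.
  rewrite setTT_bijective; exists (fun k : {ffun 'I_d -> int} => [ffun i => k i - kst x i] : {ffun 'I_d -> int}) => j;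
    apply/ffunP => i; rewrite !ffunE; [exact: addrK | exact: subrK].
apply: (@le_trans _ _ (\esum_(j in [set: {ffun 'I_d -> int}]) (E * \prod_(i < d) wt R (j i))%:E)).
  by apply: le_esum => j _; rewrite lee_fin; exact: term_bound.
apply: ge_ereal_sup => _ [X [fX _] <-].
rewrite fsumEFin // lee_fin -mulr_fsumr.
apply: ler_wpM2l; first exact: ltW (expR_gt0 _).
exact: fin_bound.
Qed.

Theorem propositionC1 (R : realType) (d : nat) (eps : R) (x : 'I_d -> R) :
  0 < eps -> eps < pi ^+ 2 / 2 ->
  ((gauss_const d eps * expR (- tdist0 d x ^+ 2 / (2 * eps)))%:E <= heatK d eps x
   /\ heatK d eps x <=
      (2 ^+ d.+1 * expR (5 * d%:R) *
        (gauss_const d eps * expR (- tdist0 d x ^+ 2 / (2 * eps))))%:E)%E.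
Proof.
move=> e0 epi; have epi' : eps <= pi ^+ 2 / 2 by exact: ltW.
have hD : tdist0 d x ^+ 2 = sqnorm_shift d x (kst x).
  by rewrite tdist0E sqr_sqrtr //; apply: sumr_ge0 => i _; exact: sqr_ge0.
rewrite hD /heatK.
set C := gauss_const d eps.
set E := expR (- sqnorm_shift d x (kst x) / (2 * eps)).
have C0 : 0 <= C by apply: powR_ge0.
have E0 : 0 < E by apply: expR_gt0.
split.
  rewrite EFinM; apply: lee_wpmul2l; first by rewrite lee_fin.
  apply: esum_ge; exists [set kst x]; first by split; [exact: finite_set1 | by []].
  by rewrite fsbig_set1.
apply: (le_trans (lee_wpmul2l _ (@esum_bound R d eps x e0 epi'))); first by rewrite lee_fin.
rewrite -EFinM lee_fin.
have e1 : 2 <= expR 1 :> R by have := expR_ge1Dx (1 : R); lra.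
have e4 : 0 < expR 4 :> R := expR_gt0 _.
have hB : (3 * expR 4) ^+ d <= 2 ^+ d.+1 * expR (5 * d%:R) :> R.
  rewrite expRM_natr exprS.
  have h5 : expR 5 = expR 4 * expR 1 :> R by rewrite -expRD; congr expR; lra.
  apply: (@le_trans _ _ ((2 * expR 5) ^+ d)).
    apply: lerXn2r; rewrite ?nnegrE; [nra | nra | rewrite h5; nra].
  rewrite exprMn.
  have t0 : 0 <= 2 ^+ d * expR 5 ^+ d :> R.
    by apply: mulr_ge0; apply: exprn_ge0 => //; exact: ltW (expR_gt0 _).
  rewrite -mulrA; lra.
rewrite -/E.
set A := 2 ^+ d.+1 * expR (5 * d%:R).
set B := (3 * expR 4) ^+ d.
have -> : C * (E * B) = (C * E) * B by rewrite mulrA.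
rewrite [leRHS]mulrC.
apply: ler_wpM2l => //.
by apply: mulr_ge0 => //; exact: ltW.
Qed.
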